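(* Let $N\ge3$ and define $s(r)=\left((N-2)\int_r^\infty(\sinh\sigma)^{1-N}d\sigma\right)^{-\frac{1}{N-2}}$ for $r>0$ (so that $\frac{ds}{s^{N-1}}=\frac{dr}{(\sinh r)^{N-1}}$). Then there exist positive constants $c_1,c_2$ such that $$s(r)=c_1e^{\frac{N-1}{N-2}r}-c_2e^{-\frac{N-3}{N-2}r}+o\!\left(e^{-\frac{N-3}{N-2}r}\right)\quad\text{as }r\to\infty.$$ *)

(* Defs.v *)
From Stdlib Require Import Reals.
From Coquelicot Require Import Coquelicot.
Open Scope R_scope.

Definition tail_int (N : nat) (r : R) : R :=
  RInt_gen (fun sigma => / (sinh sigma ^ (N - 1))) (at_point r) (Rbar_locally p_infty).

Definition s_fun (N : nat) (r : R) : R :=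
  Rpower ((INR N - 2) * tail_int N r) (- / (INR N - 2)).

(* Main.v *)
Require Import Defs.
From Stdlib Require Import Reals.
From Coquelicot Require Import Coquelicot.
From Stdlib Require Import Lra Lia Psatz Classical.
Open Scope R_scope.
Lemma exp_pow_INR (k : nat) (x : R) : exp (INR k * x) = exp x ^ k.
Proof.
induction k as [|k IH].
- simpl. rewrite Rmult_0_l. apply exp_0.
- rewrite S_INR. replace ((INR k + 1) * x) with (INR k * x + x) by ring.
  rewrite exp_plus, IH. simpl. ring.
Qed.

Lemma binom_bound (n : nat) : exists K, 0 <= K /\ forall v, 0 <= v <= 1 ->
  1 + INR n * v <= (1 + v) ^ n <= 1 + INR n * v + K * v ^ 2.
Proof.
induction n as [|n [K [HK IH]]].
- exists 0. split; [lra|]. intros v hv. simpl. lra.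
- exists (INR n + 2 * K). split.
  + pose proof (pos_INR n). lra.
  + intros v hv. destruct (IH v hv) as [h1 h2]. rewrite S_INR. simpl.
    pose proof (pos_INR n).
    split; nra.
Qed.

Lemma is_RInt_expk (k : nat) (a b : R) : (0 < k)%nat ->
  is_RInt (fun x => exp (- x) ^ k) a b ((exp (- a) ^ k - exp (- b) ^ k) / INR k).
Proof.
intros hk.
assert (hK : 0 < INR k) by (apply lt_0_INR; lia).
apply (is_RInt_ext (fun x => exp (- (INR k * x)))).
{ intros x _. rewrite <- exp_pow_INR. f_equal. ring. }
replace ((exp (- a) ^ k - exp (- b) ^ k) / INR k) with
  (minus ((fun x => - exp (- (INR k * x)) / INR k) b) ((fun x => - exp (- (INR k * x)) / INR k) a)).
2:{ unfold minus, plus, opp; simpl. rewrite <- !exp_pow_INR.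
    replace (INR k * - a) with (- (INR k * a)) by ring.
    replace (INR k * - b) with (- (INR k * b)) by ring. field. lra. }
apply (is_RInt_derive (V:=R_CompleteNormedModule) (fun x => - exp (- (INR k * x)) / INR k)).
- intros x _. auto_derive; [auto|]. field. lra.
- intros x _. apply (ex_derive_continuous (fun x => exp (- (INR k * x)))). auto_derive. auto.
Qed.

Lemma is_RInt_comb (k1 k2 k3 : nat) (c1 c2 c3 a b : R) :
  (0 < k1)%nat -> (0 < k2)%nat -> (0 < k3)%nat ->
  is_RInt (fun x => c1 * exp (- x) ^ k1 + c2 * exp (- x) ^ k2 + c3 * exp (- x) ^ k3) a b
    (c1 * ((exp (- a) ^ k1 - exp (- b) ^ k1) / INR k1)
     + c2 * ((exp (- a) ^ k2 - exp (- b) ^ k2) / INR k2)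
     + c3 * ((exp (- a) ^ k3 - exp (- b) ^ k3) / INR k3)).
Proof.
intros h1 h2 h3.
apply (is_RInt_plus (V:=R_NormedModule)); [apply (is_RInt_plus (V:=R_NormedModule))|];
  apply (is_RInt_scal (V:=R_NormedModule)); apply is_RInt_expk; auto.
Qed.
Lemma tail_exists (f : R -> R) (r M : R) :
 (forall b, r <= b -> ex_RInt f r b) ->
 (forall x, r <= x -> 0 <= f x) ->
 (forall b, r <= b -> RInt f r b <= M) ->
 exists l, is_RInt_gen f (at_point r) (Rbar_locally p_infty) l /\ l <= M /\
   (forall b, r <= b -> RInt f r b <= l).
Proof.
intros Hex Hpos Hb.
set (E := fun y => exists b, r <= b /\ y = RInt f r b).
assert (Hmono : forall b1 b2, r <= b1 <= b2 -> RInt f r b1 <= RInt f r b2).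
{ intros b1 b2 [h1 h2].
  rewrite <- (RInt_Chasles f r b1 b2); [| apply Hex; lra | apply (ex_RInt_Chasles_2 f r); [lra| apply Hex; lra]].
  assert (0 <= RInt f b1 b2).
  { apply RInt_ge_0; [lra| apply (ex_RInt_Chasles_2 f r); [lra| apply Hex; lra]|].
    intros; apply Hpos; lra. }
  simpl. unfold plus; simpl. lra. }
destruct (completeness E) as [l [Hub Hlub]].
{ exists M. intros y [b [hb ->]]. apply Hb; auto. }
{ exists (RInt f r r). exists r. split; auto; lra. }
exists l. split; [|split].
- intros P [eps Heps]. unfold filtermapi.
  assert (Hex2 : exists b0, r <= b0 /\ l - eps < RInt f r b0).
  { apply NNPP. intro Hn.
    assert (l <= l - eps).
    { apply Hlub. intros y [b [hb ->]].
      apply Rnot_lt_le. intro Hc. apply Hn. exists b; auto. }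
    destruct eps; simpl in *; lra. }
  destruct Hex2 as [b0 [hb0 hl]].
  apply (Filter_prod _ _ _ (fun x => x = r) (fun b => b0 < b)).
  + reflexivity.
  + exists b0. auto.
  + intros x y -> hy. exists (RInt f r y). split.
    * apply (RInt_correct (V:=R_CompleteNormedModule)). apply Hex. lra.
    * apply Heps.
      assert (RInt f r b0 <= RInt f r y) by (apply Hmono; lra).
      assert (RInt f r y <= l) by (apply Hub; exists y; split; auto; lra).
      change (Rabs (RInt f r y - l) < eps). apply Rabs_def1; lra.
- apply Hlub. intros y [b [hb ->]]. apply Hb; auto.
- intros b hb. apply Hub. exists b; auto.
Qed.
Lemma q_small (s : R) : 1 <= s -> 0 < exp (- s) <= 1/2.
Proof.
intros hs. split; [apply exp_pos|].
assert (exp (-s) <= exp (- (1))).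
{ destruct (Rle_lt_or_eq_dec _ _ hs) as [h|h]; [apply Rlt_le; apply exp_increasing; lra| rewrite <- h; apply Rle_refl]. }
pose proof (exp_ineq1 1 ltac:(discrR)).
rewrite (exp_Ropp 1) in H.
assert (/ exp 1 <= /2) by (apply Rinv_le_contravar; lra). lra.
Qed.

Lemma f_bound (n : nat) (K : R) (HK : 0 <= K)
  (Hb : forall v, 0 <= v <= 1 -> 1 + INR n * v <= (1 + v) ^ n <= 1 + INR n * v + K * v ^ 2)
  (s : R) (hs : 1 <= s) :
  2 ^ n * (exp (-s) ^ n + INR n * exp (-s) ^ (n + 2)) <= / sinh s ^ n <=
  2 ^ n * (exp (-s) ^ n + INR n * exp (-s) ^ (n + 2) + (2 * INR n + 4 * K) * exp (-s) ^ (n + 4)).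
Proof.
destruct (q_small s hs) as [hq0 hq1].
set (q := exp (- s)) in *.
set (v := q ^ 2 / (1 - q ^ 2)).
assert (Hid : / sinh s ^ n = 2 ^ n * q ^ n * (1 + v) ^ n).
{ rewrite <- pow_inv, <- !Rpow_mult_distr. f_equal.
  unfold sinh, v. fold q. replace (exp s) with (/ q).
  2:{ unfold q. rewrite exp_Ropp, Rinv_inv. auto. }
  field. split; nra. }
rewrite Hid.
assert (hd : 3/4 <= 1 - q^2) by nra.
assert (hid : 0 < / (1 - q^2) <= 4/3).
{ split; [apply Rinv_0_lt_compat; lra|].
  replace (4/3) with (/ (3/4)) by field. apply Rinv_le_contravar; lra. }
assert (hv : v = q ^ 2 + q ^ 4 * / (1 - q ^ 2)) by (unfold v; field; nra).
assert (hq4 : 0 <= q ^ 4) by (apply pow_le; lra).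
assert (hq2 : q ^ 2 <= 1/4) by nra.
assert (hv1 : q ^ 2 <= v) by (rewrite hv; nra).
assert (hv2 : v <= q ^ 2 + 2 * q ^ 4) by (rewrite hv; nra).
assert (hv3 : 0 <= v <= 1) by nra.
destruct (Hb v hv3) as [hb1 hb2].
pose proof (pos_INR n).
assert (hQ : 0 < 2 ^ n * q ^ n) by (apply Rmult_lt_0_compat; apply pow_lt; lra).
rewrite !pow_add.
split.
- replace (2 ^ n * (q ^ n + INR n * (q ^ n * q ^ 2))) with (2 ^ n * q ^ n * (1 + INR n * q ^ 2)) by ring.
  apply Rmult_le_compat_l; nra.
- replace (2 ^ n * (q ^ n + INR n * (q ^ n * q ^ 2) + (2 * INR n + 4 * K) * (q ^ n * q ^ 4)))
    with (2 ^ n * q ^ n * (1 + INR n * q ^ 2 + (2 * INR n + 4 * K) * q ^ 4)) by ring.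
  apply Rmult_le_compat_l; [lra|].
  assert (v ^ 2 <= 4 * q ^ 4) by nra.
  nra.
Qed.

Lemma f_cont (n : nat) (x : R) : 0 < x -> continuous (fun s => / sinh s ^ n) x.
Proof.
intros hx. apply (ex_derive_continuous (fun s => / sinh s ^ n)). unfold sinh. auto_derive.
apply pow_nonzero. assert (exp (- x) < exp x) by (apply exp_increasing; lra). lra.
Qed.

Lemma int_bounds (n : nat) (K : R) (hn : (0 < n)%nat) (HK : 0 <= K)
  (Hb : forall v, 0 <= v <= 1 -> 1 + INR n * v <= (1 + v) ^ n <= 1 + INR n * v + K * v ^ 2)
  (r b : R) (hr : 1 <= r) (hrb : r <= b) :
  ex_RInt (fun s => / sinh s ^ n) r b /\
  2 ^ n * ((exp (- r) ^ n - exp (- b) ^ n) / INR n)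
   + 2 ^ n * INR n * ((exp (- r) ^ (n + 2) - exp (- b) ^ (n + 2)) / INR (n + 2))
   + 0 * ((exp (- r) ^ (n + 4) - exp (- b) ^ (n + 4)) / INR (n + 4))
   <= RInt (fun s => / sinh s ^ n) r b <=
  2 ^ n * ((exp (- r) ^ n - exp (- b) ^ n) / INR n)
   + 2 ^ n * INR n * ((exp (- r) ^ (n + 2) - exp (- b) ^ (n + 2)) / INR (n + 2))
   + 2 ^ n * (2 * INR n + 4 * K) * ((exp (- r) ^ (n + 4) - exp (- b) ^ (n + 4)) / INR (n + 4)).
Proof.
assert (Hex : ex_RInt (fun s => / sinh s ^ n) r b).
{ apply (ex_RInt_continuous (V:=R_CompleteNormedModule)). intros z hz. apply f_cont.
  rewrite Rmin_left in hz by lra. lra. }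
split; [exact Hex|].
assert (hn2 : (0 < n + 2)%nat) by lia.
assert (hn4 : (0 < n + 4)%nat) by lia.
split.
- rewrite <- (is_RInt_unique _ _ _ _ (is_RInt_comb n (n+2) (n+4) (2^n) (2^n * INR n) 0 r b hn hn2 hn4)).
  apply RInt_le; auto.
  + eexists. apply is_RInt_comb; auto.
  + intros x hx. destruct (f_bound n K HK Hb x ltac:(lra)) as [h1 h2]. lra.
- rewrite <- (is_RInt_unique _ _ _ _ (is_RInt_comb n (n+2) (n+4) (2^n) (2^n * INR n) (2 ^ n * (2 * INR n + 4 * K)) r b hn hn2 hn4)).
  apply RInt_le; auto.
  + eexists. apply is_RInt_comb; auto.
  + intros x hx. destruct (f_bound n K HK Hb x ltac:(lra)) as [h1 h2]. lra.
Qed.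

Lemma pow_le1 (q : R) (d : nat) : 0 <= q <= 1 -> 0 <= q ^ d <= 1.
Proof.
intros hq. induction d as [|d IH]; simpl; nra.
Qed.

Lemma pow_le_dec (q : R) (k j : nat) : 0 <= q <= 1 -> (k <= j)%nat -> q ^ j <= q ^ k.
Proof.
intros hq hkj. replace j with (k + (j - k))%nat by lia. rewrite pow_add.
pose proof (pow_le1 q (j - k) hq). assert (0 <= q ^ k) by (apply pow_le; lra). nra.
Qed.

Lemma tail_bounds (n : nat) (K : R) (hn : (2 <= n)%nat) (HK : 0 <= K)
  (Hb : forall v, 0 <= v <= 1 -> 1 + INR n * v <= (1 + v) ^ n <= 1 + INR n * v + K * v ^ 2)
  (r : R) (hr : 1 <= r) :
  2 ^ n / INR n * exp (- r) ^ n + 2 ^ n * INR n / INR (n + 2) * exp (- r) ^ (n + 2)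
    - (2 ^ n / INR n + 2 ^ n * INR n / INR (n + 2)) * exp (- r) ^ (n + 4)
  <= RInt_gen (fun s => / sinh s ^ n) (at_point r) (Rbar_locally p_infty) <=
  2 ^ n / INR n * exp (- r) ^ n + 2 ^ n * INR n / INR (n + 2) * exp (- r) ^ (n + 2)
    + 2 ^ n * (2 * INR n + 4 * K) / INR (n + 4) * exp (- r) ^ (n + 4).
Proof.
assert (hn0 : (0 < n)%nat) by lia.
assert (hN : 0 < INR n) by (apply lt_0_INR; lia).
assert (hN2 : 0 < INR (n + 2)) by (apply lt_0_INR; lia).
assert (hN4 : 0 < INR (n + 4)) by (apply lt_0_INR; lia).
assert (h2n : 0 < 2 ^ n) by (apply pow_lt; lra).
assert (hqr : 0 < exp (- r) <= 1/2) by (apply q_small; lra).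
set (M := 2 ^ n / INR n * exp (- r) ^ n + 2 ^ n * INR n / INR (n + 2) * exp (- r) ^ (n + 2)
    + 2 ^ n * (2 * INR n + 4 * K) / INR (n + 4) * exp (- r) ^ (n + 4)).
destruct (tail_exists (fun s => / sinh s ^ n) r M) as [l [Hl [HlM Hlb]]].
- intros b hb. apply (int_bounds n K hn0 HK Hb r b hr hb).
- intros x hx. apply Rlt_le, Rinv_0_lt_compat, pow_lt.
  unfold sinh. assert (exp (- x) < exp x) by (apply exp_increasing; lra). lra.
- intros b hb. destruct (int_bounds n K hn0 HK Hb r b hr hb) as [_ [_ h]].
  assert (hqb : 0 < exp (- b)) by apply exp_pos.
  assert (0 <= exp (- b) ^ n) by (apply pow_le; lra).
  assert (0 <= exp (- b) ^ (n + 2)) by (apply pow_le; lra).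
  assert (0 <= exp (- b) ^ (n + 4)) by (apply pow_le; lra).
  assert (0 <= 2 ^ n * INR n) by nra.
  assert (0 <= 2 ^ n * (2 * INR n + 4 * K)) by nra.
  eapply Rle_trans; [exact h|]. unfold M. unfold Rdiv.
  pose proof (Rinv_0_lt_compat _ hN). pose proof (Rinv_0_lt_compat _ hN2).
  pose proof (Rinv_0_lt_compat _ hN4).
  assert (0 <= 2 ^ n * exp (- b) ^ n * / INR n) by (apply Rmult_le_pos; [apply Rmult_le_pos|]; lra).
  assert (0 <= 2 ^ n * INR n * exp (- b) ^ (n + 2) * / INR (n + 2)) by (apply Rmult_le_pos; [apply Rmult_le_pos|]; lra).
  assert (0 <= 2 ^ n * (2 * INR n + 4 * K) * exp (- b) ^ (n + 4) * / INR (n + 4)) by (apply Rmult_le_pos; [apply Rmult_le_pos|]; lra).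
  nra.
- rewrite (is_RInt_gen_unique _ _ Hl). split; [|exact HlM].
  assert (h3 : r <= 3 * r) by lra.
  pose proof (Hlb _ h3) as hl3.
  destruct (int_bounds n K hn0 HK Hb r (3 * r) hr h3) as [_ [h _]].
  assert (hq3 : exp (- (3 * r)) = exp (- r) ^ 3).
  { rewrite <- exp_pow_INR. f_equal. simpl. ring. }
  rewrite hq3, <- !pow_mult in h.
  set (q := exp (- r)) in *.
  assert (hqq : 0 <= q <= 1) by lra.
  assert (e1 : q ^ (3 * n) <= q ^ (n + 4)) by (apply pow_le_dec; [lra|lia]).
  assert (e2 : q ^ (3 * (n + 2)) <= q ^ (n + 4)) by (apply pow_le_dec; [lra|lia]).
  assert (e3 : 0 <= q ^ (3 * (n + 4))) by (apply pow_le; lra).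
  assert (0 <= 2 ^ n * INR n) by nra.
  pose proof (Rinv_0_lt_compat _ hN). pose proof (Rinv_0_lt_compat _ hN2).
  unfold Rdiv in *.
  assert (2 ^ n * q ^ (3 * n) * / INR n <= 2 ^ n * q ^ (n + 4) * / INR n).
  { apply Rmult_le_compat_r; [lra|]. apply Rmult_le_compat_l; lra. }
  assert (2 ^ n * INR n * q ^ (3 * (n + 2)) * / INR (n + 2) <= 2 ^ n * INR n * q ^ (n + 4) * / INR (n + 2)).
  { apply Rmult_le_compat_r; [lra|]. apply Rmult_le_compat_l; lra. }
  nra.
Qed.
Lemma exp_taylor (y : R) : y <= 1/2 -> 0 <= exp y - 1 - y <= 2 * y ^ 2.
Proof.
intros hy. pose proof (exp_ineq1_le y). pose proof (exp_ineq1_le (- y)).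
assert (hp : exp y * exp (- y) = 1) by (rewrite <- exp_plus; replace (y + - y) with 0 by ring; apply exp_0).
pose proof (exp_pos y).
split; [lra|].
assert (exp y * (1 - y) <= 1) by nra.
assert (1 <= (1 + y + 2 * y ^ 2) * (1 - y)) by nra.
nra.
Qed.

Lemma ln_bounds (x : R) : -1/2 <= x -> x - 2 * x ^ 2 <= ln (1 + x) <= x.
Proof.
intros hx. split.
- set (L := ln (1 + x)).
  pose proof (exp_ineq1_le (- L)).
  assert (e : exp (- L) = / (1 + x)).
  { unfold L. rewrite exp_Ropp, exp_ln; [reflexivity| lra]. }
  rewrite e in H.
  assert (hi : (1 + x) * / (1 + x) = 1) by (field; lra).
  assert ((1+x)*(1-L) <= (1+x) * /(1+x)) by (apply Rmult_le_compat_l; lra).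
  assert (0 <= x ^ 2 * (1 + 2 * x)) by (apply Rmult_le_pos; nra).
  nra.
- assert (ln (1 + x) <= ln (exp x)) by (apply ln_le; [lra|]; pose proof (exp_ineq1_le x); lra).
  rewrite ln_exp in H. exact H.
Qed.

Lemma Rabs_le_inv (x b : R) : Rabs x <= b -> - b <= x <= b.
Proof. intros h. pose proof (Rle_abs x). pose proof (Rle_abs (- x)). rewrite Rabs_Ropp in H0. lra. Qed.

Lemma final_est (m a x q C D c1 : R) : 1 <= m -> 0 < q <= 1 -> Rabs (x - a * q ^ 2) <= C * q ^ 4 ->
  Rabs x <= D * q ^ 2 -> Rabs x <= 1/4 -> 0 < c1 -> 0 <= C ->
  Rabs (c1 * (exp (- ln (1 + x) / m) - 1 + a * q ^ 2 / m) / q ^ 2) <= c1 * (10 * D ^ 2 + C) * q.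
Proof.
intros hm hq hE hxD hx hc1 hC.
set (y := - ln (1 + x) / m).
assert (hx' : -1/4 <= x <= 1/4) by (apply Rabs_le_inv in hx; lra).
destruct (ln_bounds x ltac:(lra)) as [l1 l2].
assert (hmi : 0 < / m <= 1) by (split; [apply Rinv_0_lt_compat; lra| rewrite <- Rinv_1; apply Rinv_le_contravar; lra]).
assert (hy : y = - ln (1 + x) * / m) by reflexivity.
assert (hx2 : 0 <= x ^ 2 <= 1/16) by nra.
assert (hyx1 : 0 <= y + x / m <= 2 * x ^ 2) by (unfold Rdiv; rewrite hy; nra).
assert (hyb : Rabs y <= 2 * Rabs x).
{ apply Rabs_le. destruct (Rle_dec 0 x).
  - rewrite Rabs_right by lra. unfold Rdiv in hyx1; nra.
  - rewrite Rabs_left by lra. unfold Rdiv in hyx1; nra. }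
assert (hy2 : y ^ 2 <= 4 * x ^ 2).
{ replace (y ^ 2) with (Rabs y ^ 2) by apply pow2_abs.
  replace (x ^ 2) with (Rabs x ^ 2) by apply pow2_abs.
  pose proof (Rabs_pos y). nra. }
assert (hyle : y <= 1/2) by (pose proof (Rle_abs y); pose proof (Rabs_pos x); lra).
destruct (exp_taylor y hyle) as [t1 t2].
assert (hE' : - (C * q ^ 4) <= x - a * q ^ 2 <= C * q ^ 4) by (apply Rabs_le_inv; auto).
assert (hq2 : 0 < q ^ 2) by (apply pow_lt; lra).
assert (hnum : Rabs (exp y - 1 + a * q ^ 2 / m) <= 10 * x ^ 2 + C * q ^ 4).
{ replace (exp y - 1 + a * q ^ 2 / m) with ((exp y - 1 - y) + (y + x / m) - (x - a * q ^ 2) / m) by (field; lra).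
  unfold Rdiv. apply Rabs_le.
  assert (0 <= C * q ^ 4) by (apply Rmult_le_pos; [lra| apply pow_le; lra]).
  split; nra. }
assert (hx2D : x ^ 2 <= D ^ 2 * q ^ 4).
{ replace (x ^ 2) with (Rabs x ^ 2) by apply pow2_abs.
  pose proof (Rabs_pos x). replace (D ^ 2 * q ^ 4) with ((D * q ^ 2) ^ 2) by ring.
  apply pow_incr. lra. }
unfold Rdiv at 1. rewrite Rabs_mult, Rabs_mult, Rabs_inv, (Rabs_right c1) by lra.
rewrite (Rabs_right (q ^ 2)) by lra.
apply (Rmult_le_reg_r (q ^ 2)); [lra|].
rewrite Rmult_assoc, Rinv_l by lra. rewrite Rmult_1_r.
assert (h43 : q ^ 4 <= q * q ^ 2).
{ replace (q ^ 4) with (q * q ^ 2 * q) by ring. assert (0 < q * q ^ 2) by nra. nra. }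
assert (e : c1 * (10 * D ^ 2 + C) * q * q ^ 2 = c1 * ((10 * D ^ 2 + C) * (q * q ^ 2))) by ring.
rewrite e. apply Rmult_le_compat_l; [lra|].
assert (0 <= D ^ 2) by nra.
nra.
Qed.

Theorem lemma6p4_test (N : nat) (hN : (3 <= N)%nat) :
  exists c1 c2 : R, 0 < c1 /\ 0 < c2 /\
    is_lim
      (fun r => (Rpower ((INR N - 2) * RInt_gen (fun sigma => / (sinh sigma ^ (N - 1))) (at_point r) (Rbar_locally p_infty)) (- / (INR N - 2))
                 - c1 * exp ((INR N - 1) / (INR N - 2) * r)
                 + c2 * exp (- ((INR N - 3) / (INR N - 2)) * r))
                / exp (- ((INR N - 3) / (INR N - 2)) * r))
      p_infty 0.
Proof.
destruct N as [|[|m]]; [lia|lia|].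
assert (hm1 : (1 <= m)%nat) by lia.
replace (S (S m) - 1)%nat with (S m) by lia.
assert (hmr : 1 <= INR m) by (apply (le_INR 1) in hm1; simpl in hm1; lra).
assert (eN2 : INR (S (S m)) - 2 = INR m) by (rewrite !S_INR; ring).
assert (eN1 : INR (S (S m)) - 1 = INR (S m)) by (rewrite !S_INR; ring).
assert (eN3 : INR (S (S m)) - 3 = INR m - 1) by (rewrite !S_INR; ring).
assert (enm : INR (S m) = INR m + 1) by (rewrite S_INR; ring).
rewrite eN1, eN2, eN3. clear eN1 eN2 eN3.
set (n := S m) in *.
assert (hn2 : (2 <= n)%nat) by (unfold n; lia).
destruct (binom_bound n) as [K [HK Hb]].
assert (hNn : 0 < INR n) by lra.
assert (hN2 : 0 < INR (n + 2)) by (apply lt_0_INR; lia).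
assert (hN4 : 0 < INR (n + 4)) by (apply lt_0_INR; lia).
assert (h2n : 0 < 2 ^ n) by (apply pow_lt; lra).
set (B := 2 ^ n / INR n).
assert (hB : 0 < B) by (unfold B; apply Rdiv_lt_0_compat; lra).
set (a := INR n * INR n / INR (n + 2)).
assert (ha : 0 < a) by (unfold a; apply Rdiv_lt_0_compat; nra).
set (Cu := 2 ^ n * (2 * INR n + 4 * K) / INR (n + 4) / B).
assert (hCu : 0 <= Cu) by (unfold Cu; apply Rmult_le_pos; [apply Rmult_le_pos; [nra| left; apply Rinv_0_lt_compat; lra]| left; apply Rinv_0_lt_compat; lra]).
set (C := 1 + a + Cu).
set (D := a + C).
set (A := INR m * B).
assert (hA : 0 < A) by (unfold A; nra).
set (c1 := exp (- / INR m * ln A)).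
assert (hc1 : 0 < c1) by apply exp_pos.
exists c1, (c1 * a / INR m).
split; [exact hc1|]. split; [apply Rdiv_lt_0_compat; nra|].
apply is_lim_spec. intros eps.
assert (hD : 0 <= D) by (unfold D, C; lra).
set (Cst := c1 * (10 * D ^ 2 + C)).
assert (hCst : 0 < Cst) by (unfold Cst, C; apply Rmult_lt_0_compat; [lra|]; nra).
pose proof (cond_pos eps) as heps.
exists (Rmax 1 (Rmax (ln (4 * D + 1)) (ln (Cst / eps)))).
intros r hr.
assert (hr1 : 1 <= r) by (pose proof (Rmax_l 1 (Rmax (ln (4 * D + 1)) (ln (Cst / eps)))); lra).
assert (hr2 : ln (4 * D + 1) < r) by (pose proof (Rmax_r 1 (Rmax (ln (4 * D + 1)) (ln (Cst / eps)))); pose proof (Rmax_l (ln (4 * D + 1)) (ln (Cst / eps))); lra).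
assert (hr3 : ln (Cst / eps) < r) by (pose proof (Rmax_r 1 (Rmax (ln (4 * D + 1)) (ln (Cst / eps)))); pose proof (Rmax_r (ln (4 * D + 1)) (ln (Cst / eps))); lra).
destruct (q_small r hr1) as [hq0 hq1].
assert (hqD : exp (- r) < / (4 * D + 1)).
{ rewrite <- (exp_ln (4 * D + 1)) by lra. rewrite <- exp_Ropp. apply exp_increasing. lra. }
assert (hqe : exp (- r) < eps / Cst).
{ replace (eps / Cst) with (/ (Cst / eps)) by (field; lra).
  rewrite <- (exp_ln (Cst / eps)) by (apply Rdiv_lt_0_compat; lra). rewrite <- exp_Ropp. apply exp_increasing. lra. }
destruct (tail_bounds n K hn2 HK Hb r hr1) as [tl tu].
set (T := RInt_gen (fun s => / sinh s ^ n) (at_point r) (Rbar_locally p_infty)) in *.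
set (q := exp (- r)) in *.
assert (exists T' : R, T' = T) as [T' HT'] by (exists T; reflexivity).
rewrite <- HT' in tl, tu |- *. clearbody T. clear HT' T. rename T' into T.
set (Q := q ^ n) in *.
assert (hQ : 0 < Q) by (unfold Q; apply pow_lt; lra).
rewrite !pow_add in tl, tu. fold Q in tl, tu.
assert (tl' : B * Q * (1 + a * q ^ 2 - (1 + a) * q ^ 4) <= T).
{ eapply Rle_trans; [|exact tl]. right. unfold B, a. field. lra. }
assert (tu' : T <= B * Q * (1 + a * q ^ 2 + Cu * q ^ 4)).
{ eapply Rle_trans; [exact tu|]. right. unfold B, a, Cu, B. field. split; lra. }
clear tl tu.
set (x := T / (B * Q) - 1).
assert (hT : @eq R T (B * Q * (1 + x))) by (unfold x; field; split; lra).
assert (hBQ : 0 < B * Q) by nra.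
rewrite hT in tl', tu'.
assert (hx1 : - ((1 + a) * q ^ 4) <= x - a * q ^ 2 <= Cu * q ^ 4).
{ split.
  - apply (Rmult_le_reg_l (B * Q)); [lra|]. nra.
  - apply (Rmult_le_reg_l (B * Q)); [lra|]. nra. }
assert (hq4 : 0 <= q ^ 4 <= q ^ 2).
{ split; [apply pow_le; lra|]. replace (q ^ 4) with (q ^ 2 * q ^ 2) by ring.
  assert (0 < q ^ 2) by (apply pow_lt; lra). assert (q ^ 2 <= 1) by nra. nra. }
assert (hE : Rabs (x - a * q ^ 2) <= C * q ^ 4).
{ apply Rabs_le. unfold C. nra. }
assert (hxD : Rabs x <= D * q ^ 2).
{ apply Rabs_le. apply Rabs_le_inv in hE.
  assert (C * q ^ 4 <= C * q ^ 2) by (apply Rmult_le_compat_l; [unfold C; lra| lra]).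
  assert (0 <= a * q ^ 2) by (apply Rmult_le_pos; lra).
  replace (D * q ^ 2) with (a * q ^ 2 + C * q ^ 2) by (unfold D; ring). lra. }
assert (hx4 : Rabs x <= 1/4).
{ assert (D * q ^ 2 <= D * q) by (apply Rmult_le_compat_l; [lra| nra]).
  assert (D * q < 1/4).
  { apply (Rmult_lt_reg_r (4 * D + 1)); [lra|].
    assert (q * (4 * D + 1) < 1).
    { apply (Rmult_lt_reg_r (/ (4 * D + 1))). apply Rinv_0_lt_compat; lra.
      rewrite Rmult_assoc, Rinv_r, Rmult_1_r, Rmult_1_l by lra. lra. }
    nra. }
  lra. }
assert (hfin := final_est (INR m) a x q C D c1 hmr ltac:(lra) hE hxD hx4 hc1 ltac:(unfold C; lra)).
fold Cst in hfin.
assert (hx0 : 0 < 1 + x) by (apply Rabs_le_inv in hx4; lra).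
assert (hQe : Q = exp (INR n * - r)) by (unfold Q, q; rewrite exp_pow_INR; reflexivity).
assert (hRp : Rpower (INR m * T) (- / INR m) = c1 * exp (INR n / INR m * r) * exp (- ln (1 + x) / INR m)).
{ unfold Rpower. rewrite hT. replace (INR m * (B * Q * (1 + x))) with (A * Q * (1 + x)) by (unfold A; ring).
  rewrite (ln_mult (A * Q) (1 + x)) by nra. rewrite (ln_mult A Q) by lra.
  rewrite hQe, ln_exp. unfold c1. rewrite <- !exp_plus. f_equal. field. lra. }
assert (he2 : exp (- ((INR m - 1) / INR m) * r) = exp (INR n / INR m * r) * q ^ 2).
{ unfold q. rewrite <- (exp_pow_INR 2), <- exp_plus. f_equal. rewrite enm. simpl (INR 2). field. lra. }
rewrite hRp, he2, Rminus_0_r.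
set (e1 := exp (INR n / INR m * r)).
assert (he1 : 0 < e1) by apply exp_pos.
assert (hq2 : 0 < q ^ 2) by (apply pow_lt; lra).
replace ((c1 * e1 * exp (- ln (1 + x) / INR m) - c1 * e1 + c1 * a / INR m * (e1 * q ^ 2)) / (e1 * q ^ 2))
  with (c1 * (exp (- ln (1 + x) / INR m) - 1 + a * q ^ 2 / INR m) / q ^ 2) by (field; repeat split; lra).
eapply Rle_lt_trans; [exact hfin|].
apply (Rmult_lt_reg_r (/ Cst)); [apply Rinv_0_lt_compat; lra|].
replace (Cst * q * / Cst) with q by (field; lra). exact hqe.
Qed.

Theorem lemma6p4 (N : nat) (hN : (3 <= N)%nat) :
  exists c1 c2 : R, 0 < c1 /\ 0 < c2 /\
    is_lim
      (fun r => (s_fun N r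
                 - c1 * exp ((INR N - 1) / (INR N - 2) * r)
                 + c2 * exp (- ((INR N - 3) / (INR N - 2)) * r))
                / exp (- ((INR N - 3) / (INR N - 2)) * r))
      p_infty 0.
Proof.
unfold s_fun, tail_int. exact (lemma6p4_test N hN).
Qed.
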